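(* Let $a<b$ be positive integers such that $b$ is not a multiple of $a$, and let $$B=\begin{pmatrix}0&-a&0&b\\1&0&-1&0\\0&a&0&-b\\-1&0&1&0\end{pmatrix}.$$ Then $B$ is skew-symmetrizable with skew-symmetrizer $\operatorname{diag}(1,a,1,b)$ (hence strongly primitive when $\gcd(a,b)=1$), and $B$ does not admit a global unfolding. More precisely, for every unfolding $(C,(e_i),(E_i))$ of $B$, the data $(\mu_2\mu_4(C),(e_i),(E_i))$ is not an unfolding of $\mu_2\mu_4(B)$: the $E_1\times E_3$ block of $\mu_2\mu_4(C)$ contains both a positive and a negative entry.
   Context: An $n\times n$ integer matrix $B$ is skew-symmetrizable if there is $D=\operatorname{diag}(d_1,\dots,d_n)$ with positive integer entries such that $DB$ is skew-symmetric; strongly primitive if such $D$ can be chosen with pairwise coprime $d_i$. Matrix mutation: $\mu_k(B)=B'$ with $b'_{ij}=-b_{ij}$ if $i=k$ or $j=k$, and $b'_{ij}=b_{ij}+\frac{b_{ik}|b_{kj}|+|b_{ik}|b_{kj}}{2}$ otherwise. An unfolding of $B$ is a triple $(C,(e_i)_{i=1}^n,(E_i)_{i=1}^n)$: positive integers $e_i$ with $b_{ij}e_j=-b_{ji}e_i$; disjoint index sets $E_i$ with $|E_i|=e_i$; a skew-symmetric integer matrix $C$ indexed by $\bigcup E_i$, such that (1) the sum of entries in each column of each $E_i\times E_j$ block of $C$ equals $b_{ij}$, and (2) if $b_{ij}\ge0$ then the $E_i\times E_j$ block of $C$ has all entries nonnegative. For an unfolding, the composite mutation $\mu_k=\prod_{\bar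 k\in E_k}\mu_{\bar k}$ of $C$ is well defined (its factors commute). $B$ admits a global unfolding if some unfolding $(C,(e_i),(E_i))$ has the property that for every finite sequence $(k_1,\dots,k_\ell)$ of indices, $(\mu_{k_\ell}\cdots\mu_{k_1}(C),(e_i),(E_i))$ is an unfolding of $\mu_{k_\ell}\cdots\mu_{k_1}(B)$. *)

(* Defs.v *)
From HB Require Import structures.
From mathcomp Require Import all_boot all_order all_algebra.
Set Implicit Arguments. Unset Strict Implicit. Unset Printing Implicit Defensive.
Import Order.TTheory GRing.Theory Num.Theory.
Local Open Scope ring_scope.

(* Integer matrices indexed by 'I_n (0-based: paper index i is here i-1). *)

Definition skew_symmetrizer (n : nat) (B : 'M[int]_n) (d : 'I_n -> nat) : Prop :=
  (forall i, (0 < d i)%N) /\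
  (forall i j, (d i)%:Z * B i j = - ((d j)%:Z * B j i)).

Definition skew_symmetrizable (n : nat) (B : 'M[int]_n) : Prop :=
  exists d, skew_symmetrizer B d.

Definition strongly_primitive (n : nat) (B : 'M[int]_n) : Prop :=
  exists d, skew_symmetrizer B d /\ (forall i j, i != j -> coprime (d i) (d j)).

(* Matrix mutation at k. The numerator is always even, so division is exact. *)
Definition mutate (n : nat) (k : 'I_n) (B : 'M[int]_n) : 'M[int]_n :=
  \matrix_(i, j)
    if (i == k) || (j == k) then - B i j
    else B i j + ((B i k * `|B k j| + `|B i k| * B k j) %/ 2)%Z.

(* Sequential mutation: mutate_seq [:: k1; ...; kl] B = mu_kl ... mu_k1 (B). *)
Definition mutate_seq (n : nat) (s : seq 'I_n) (B : 'M[int]_n) : 'M[int]_n :=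
  foldl (fun M k => mutate k M) B s.

(* An unfolding: C is indexed by 'I_N = disjoint union of the blocks
   E_i := [set r | p r == i]; e_i := #|E_i|. *)
Definition block (n N : nat) (p : 'I_N -> 'I_n) (i : 'I_n) : {set 'I_N} :=
  [set r | p r == i].

Definition unfolding (n N : nat) (B : 'M[int]_n) (C : 'M[int]_N) (p : 'I_N -> 'I_n) : Prop :=
  [/\ (forall i, (0 < #|block p i|)%N),
      (forall i j, B i j * (#|block p j|)%:Z = - (B j i * (#|block p i|)%:Z)),
      (forall r c, C r c = - C c r),
      (forall i j c, p c = j -> \sum_(r in block p i) C r c = B i j) &
      (forall i j r c, p r = i -> p c = j -> 0 <= B i j -> 0 <= C r c)].

Definition mutate_block (n N : nat) (p : 'I_N -> 'I_n) (k : 'I_n) (C : 'M[int]_N) : 'M[int]_N :=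
  foldl (fun M kb => mutate kb M) C (enum (block p k)).

Definition mutate_block_seq (n N : nat) (p : 'I_N -> 'I_n) (s : seq 'I_n) (C : 'M[int]_N)
  : 'M[int]_N :=
  foldl (fun M k => mutate_block p k M) C s.

Definition global_unfolding (n : nat) (B : 'M[int]_n) : Prop :=
  exists (N : nat) (C : 'M[int]_N) (p : 'I_N -> 'I_n),
    unfolding B C p /\
    forall s : seq 'I_n, unfolding (mutate_seq s B) (mutate_block_seq p s C) p.

Definition Bab (a b : nat) : 'M[int]_4 :=
  \matrix_(i < 4, j < 4)
    nth 0 (nth [::] [:: [:: 0; - a%:Z; 0; b%:Z];
                       [:: 1; 0; -1; 0];
                       [:: 0; a%:Z; 0; - b%:Z];
                       [:: -1; 0; 1; 0]] i) j.

Definition dab (a b : nat) (i : 'I_4) : nat := nth 0%N [:: 1; a; 1; b]%N i.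

Definition i1 : 'I_4 := inord 0.
Definition i2 : 'I_4 := inord 1.
Definition i3 : 'I_4 := inord 2.
Definition i4 : 'I_4 := inord 3.

(* Main.v *)
Require Import Defs.
From HB Require Import structures.
From mathcomp Require Import all_boot all_order all_algebra.
From mathcomp Require Import zify.
Import Order.TTheory GRing.Theory Num.Theory.
Local Open Scope ring_scope.

Lemma term_le (T : finType) (A : {set T}) (f : T -> int) x :
  (forall y, y \in A -> 0 <= f y) -> x \in A -> f x <= \sum_(y in A) f y.
Proof.
move=> hf xA; rewrite (bigD1 x) //= lerDl sumr_ge0 // => y /andP[yA _]; exact: hf.
Qed.

Lemma sum_unit (T : finType) (A : {set T}) (f : T -> int) :
  (forall x, x \in A -> 0 <= f x) -> \sum_(x in A) f x = 1 ->
  (forall x, x \in A -> f x <= 1) /\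
  (forall x y, x \in A -> y \in A -> 0 < f x -> 0 < f y -> x = y).
Proof.
move=> hf hs; split.
  by move=> x xA; rewrite -hs; apply: term_le.
move=> x y xA yA fx fy; apply/eqP; apply/negPn/negP => nxy.
have: f x + f y <= 1.
  rewrite -hs (bigD1 x) //= lerD2l (bigD1 y) /=; last by rewrite yA eq_sym nxy.
  rewrite lerDl sumr_ge0 // => z /andP[/andP[zA _] _]; exact: hf.
lia.
Qed.

Lemma sum_nz (T : finType) (A : {set T}) (f : T -> int) :
  \sum_(x in A) f x != 0 -> exists x, x \in A /\ f x != 0.
Proof.
move=> h; case: (boolP [exists x in A, f x != 0]) => [/existsP[x /andP[xA hx]]| hn].
  by exists x.
suff: \sum_(x in A) f x = 0 by move=> e; rewrite e eqxx in h.
apply: big1 => x xA; apply/eqP; case: eqVneq => // hx.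
by move/negP: hn; case; apply/existsP; exists x; rewrite xA hx.
Qed.

Arguments sum_unit {T A f}.
Arguments sum_nz {T A f}.
Arguments term_le {T A f} x.

Lemma combi (T : finType) (E1 E2 E3 E4 : {set T}) (C : T -> T -> int) (a b : nat) (l0 : T) :
  (0 < a)%N -> (a < b)%N -> ~~ (a %| b)%N -> l0 \in E4 ->
  (forall r l, r \in E1 -> l \in E4 -> 0 <= C r l) ->
  (forall l c, l \in E4 -> c \in E3 -> 0 <= C l c) ->
  (forall r k, r \in E1 -> k \in E2 -> C r k <= 0) ->
  (forall k c, k \in E2 -> c \in E3 -> C k c <= 0) ->
  (forall r, r \in E1 -> \sum_(l in E4) C r l = 1) ->
  (forall r, r \in E1 -> \sum_(k in E2) C r k = -1) ->
  (forall c, c \in E3 -> \sum_(l in E4) C l c = 1) ->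
  (forall c, c \in E3 -> \sum_(k in E2) C k c = -1) ->
  (forall l, l \in E4 -> \sum_(r in E1) C r l = b%:Z) ->
  (forall k, k \in E2 -> \sum_(r in E1) C r k = - a%:Z) ->
  (forall l, l \in E4 -> \sum_(c in E3) C l c = b%:Z) ->
  (forall k, k \in E2 -> \sum_(c in E3) C k c = - a%:Z) ->
  (exists r c, [/\ r \in E1, c \in E3 &
      0 < \sum_(l in E4) C r l * C l c - \sum_(k in E2) C r k * C k c]) /\
  (exists r c, [/\ r \in E1, c \in E3 &
      \sum_(l in E4) C r l * C l c - \sum_(k in E2) C r k * C k c < 0]).
Proof.
move=> ha hab hdiv l0E hY hW hX hZ rY rX cW cZ sY sX sW sZ.
set P := fun r c => \sum_(l in E4) C r l * C l c.
set Q := fun r c => \sum_(k in E2) C r k * C k c.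
have U1 r (rE : r \in E1) := sum_unit (fun l lE => hY r l rE lE) (rY r rE).
have U3 c (cE : c \in E3) := sum_unit (fun l lE => hW l c lE cE) (cW c cE).
have UX r (rE : r \in E1) : (forall x, x \in E2 -> 0 <= - C r x) /\ \sum_(x in E2) - C r x = 1.
  by split; [move=> x xE; rewrite oppr_ge0; exact: hX | rewrite sumrN rX // opprK].
have U2 r (rE : r \in E1) := sum_unit (UX r rE).1 (UX r rE).2.
have UZ c (cE : c \in E3) : (forall x, x \in E2 -> 0 <= - C x c) /\ \sum_(x in E2) - C x c = 1.
  by split; [move=> x xE; rewrite oppr_ge0; exact: hZ | rewrite sumrN cZ // opprK].
have U4 c (cE : c \in E3) := sum_unit (UZ c cE).1 (UZ c cE).2.
have Pge r c l : r \in E1 -> c \in E3 -> l \in E4 -> C r l = 1 -> C l c = 1 -> 1 <= P r c.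
  move=> rE cE lE h1 h2; have := @term_le _ E4 (fun l => C r l * C l c) l.
  rewrite /P h1 h2 mulr1; apply => // y yE; apply: mulr_ge0; [exact: hY | exact: hW].
have Qge r c k : r \in E1 -> c \in E3 -> k \in E2 -> C r k = -1 -> C k c = -1 -> 1 <= Q r c.
  move=> rE cE kE h1 h2; have := @term_le _ E2 (fun k => C r k * C k c) k.
  rewrite /Q h1 h2 mulrNN mulr1; apply => // y yE; apply: mulr_le0; [exact: hX | exact: hZ].
have Ppos r c : r \in E1 -> c \in E3 -> 0 < P r c ->
    exists l, [/\ l \in E4, 0 < C r l & 0 < C l c].
  move=> rE cE h; have /sum_nz [l [lE hl]] : P r c != 0 by rewrite gt_eqF.
  exists l; split => //; have := hY r l rE lE; have := hW l c lE cE;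
    rewrite mulf_eq0 negb_or in hl; case/andP: hl => h1 h2; lia.
have Qpos r c : r \in E1 -> c \in E3 -> 0 < Q r c ->
    exists k, [/\ k \in E2, C r k < 0 & C k c < 0].
  move=> rE cE h; have /sum_nz [k [kE hk]] : Q r c != 0 by rewrite gt_eqF.
  exists k; split => //; have := hX r k rE kE; have := hZ k c kE cE;
    rewrite mulf_eq0 negb_or in hk; case/andP: hk => h1 h2; lia.
split.
-
  case: (boolP [exists r, exists c, [&& r \in E1, c \in E3 & 0 < P r c - Q r c]]).
    by case/existsP => r /existsP [c /and3P [rE cE h]]; exists r, c.
  move=> hno; exfalso.
  have Hp r c : r \in E1 -> c \in E3 -> P r c - Q r c <= 0.
    move=> rE cE; rewrite leNgt; apply/negP => h; move/negP: hno; apply.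
    by apply/existsP; exists r; apply/existsP; exists c; rewrite rE cE h.
  have /sum_nz [c [cE hc]] : \sum_(c in E3) C l0 c != 0 by rewrite sW //; lia.
  have hc1 : C l0 c = 1 by have := hW l0 c l0E cE; have := (U3 c cE).1 l0 l0E; lia.
  have /sum_nz [k [kE hk]] : \sum_(k in E2) C k c != 0 by rewrite cZ.
  have hk1 : C k c = -1 by have := hZ k c kE cE; have := (U4 c cE).1 k kE; lia.
  have : \sum_(r in E1) C r l0 <= \sum_(r in E1) - C r k.
    apply: ler_sum => r rE.
    have := hY r l0 rE l0E; have := (U1 r rE).1 l0 l0E; have := hX r k rE kE.
    have [->|hz] := eqVneq (C r l0) 0; first lia.
    move=> h1 h2 h3; have hrl : C r l0 = 1 by lia.
    have := Pge r c l0 rE cE l0E hrl hc1; have := Hp r c rE cE => h4 h5.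
    have [k' [k'E h6 h7]] : exists k', [/\ k' \in E2, C r k' < 0 & C k' c < 0].
      by apply: Qpos => //; lia.
    have ek : k' = k by apply: (U4 c cE).2 => //; lia.
    rewrite ek in h6; lia.
  rewrite sY // sumrN sX // opprK; lia.
- case: (boolP [exists r, exists c, [&& r \in E1, c \in E3 & P r c - Q r c < 0]]).
    by case/existsP => r /existsP [c /and3P [rE cE h]]; exists r, c.
  move=> hno; exfalso.
  have Hn r c : r \in E1 -> c \in E3 -> 0 <= P r c - Q r c.
    move=> rE cE; rewrite leNgt; apply/negP => h; move/negP: hno; apply.
    by apply/existsP; exists r; apply/existsP; exists c; rewrite rE cE h.
  set N := fun k l => \sum_(r in E1) (- C r k) * C r l.
  have HsN l : l \in E4 -> \sum_(k in E2) N k l = b%:Z.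
    move=> lE; rewrite /N exchange_big /= -(sY l lE); apply: eq_bigr => r rE.
    by rewrite -big_distrl /= sumrN rX // opprK mul1r.
  have HN k l : k \in E2 -> l \in E4 -> N k l = 0 \/ N k l = a%:Z.
    move=> kE lE; have [Nz | Nnz] := eqVneq (N k l) 0; first by left.
    right; have [r [rE hr]] := sum_nz Nnz.
    have := hY r l rE lE; have := (U2 r rE).1 k kE; have := hX r k rE kE.
    rewrite mulf_eq0 negb_or in hr; case/andP: hr => hr1 hr2 h1 h2 h3.
    have hrk : C r k = -1 by lia.
    have /sum_nz [c [cE hc]] : \sum_(c in E3) C k c != 0 by rewrite sZ //; lia.
    have hc1 : C k c = -1 by have := hZ k c kE cE; have := (U4 c cE).1 k kE; lia.
    have hQ := Qge r c k rE cE kE hrk hc1.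
    have [l' [l'E h4 h5]] : exists l', [/\ l' \in E4, 0 < C r l' & 0 < C l' c].
      by apply: Ppos => //; have := Hn r c rE cE; lia.
    have el : l' = l by apply: (U1 r rE).2 => //; lia.
    rewrite el in h5.
    transitivity (\sum_(r in E1) - C r k); last by rewrite sumrN sX // opprK.
    rewrite /N; apply: eq_bigr => r' r'E.
    have := (U2 r' r'E).1 k kE; have := hX r' k r'E kE.
    have [->|hz] := eqVneq (C r' k) 0; first by rewrite oppr0 mul0r.
    move=> g1 g2; have hr'k : C r' k = -1 by lia.
    have hQ' := Qge r' c k r'E cE kE hr'k hc1.
    have [l'' [l''E g4 g5]] : exists l', [/\ l' \in E4, 0 < C r' l' & 0 < C l' c].
      by apply: Ppos => //; have := Hn r' c r'E cE; lia.
    have el' : l'' = l by apply: (U3 c cE).2.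
    rewrite el' in g4; have := (U1 r' r'E).1 l lE => g6.
    have -> : C r' l = 1 by lia.
    by rewrite mulr1.
  have : (a%:Z %| b%:Z)%Z.
    rewrite -(HsN l0 l0E); apply: rpred_sum => k kE.
    by case: (HN k l0 kE l0E) => ->; [exact: dvdz0 | exact: dvdzz].
  by rewrite dvdzE /= (negbTE hdiv).
Qed.
Lemma foldl_mut (N : nat) (s : seq 'I_N) (C : 'M[int]_N) r c :
  uniq s -> (forall x y, x \in s -> y \in s -> C x y = 0) -> r \notin s -> c \notin s ->
  foldl (fun M kb => mutate kb M) C s r c =
  C r c + \sum_(kb <- s) ((C r kb * `|C kb c| + `|C r kb| * C kb c) %/ 2)%Z.
Proof.
elim: s C => [|k s IH] C /=; first by move=> *; rewrite big_nil addr0.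
case/andP => ks us hz; rewrite !inE !negb_or => /andP[rk rs] /andP[ck cs].
have hz1 x : x \in s -> C x k = 0 by move=> xs; apply: hz; rewrite inE ?xs ?eqxx ?orbT.
have hz2 x : x \in s -> C k x = 0 by move=> xs; apply: hz; rewrite inE ?xs ?eqxx ?orbT.
have neq x : x \in s -> x != k by move=> xs; apply: contraNneq ks => <-.
rewrite IH //; last first.
  move=> x y xs ys; rewrite mxE (negbTE (neq x xs)) (negbTE (neq y ys)) /=.
  by rewrite hz ?inE ?xs ?ys ?orbT // hz1 // hz2 // normr0 !mulr0 mul0r addr0.
rewrite big_cons addrA; congr (_ + _); first by rewrite mxE (negbTE rk) (negbTE ck).
apply: eq_big_seq => kb kbs; rewrite !mxE (negbTE rk) (negbTE ck) (negbTE (neq kb kbs)) /=.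
by rewrite (hz2 kb) // (hz1 kb) // normr0 !mulr0 !mul0r !addr0.
Qed.
Lemma half2 (m : int) : ((m + m) %/ 2)%Z = m.
Proof. have -> : m + m = m * 2 by lia. by rewrite mulzK. Qed.

Lemma Bab_val a b (i j : nat) : (i < 4)%N -> (j < 4)%N ->
  Bab a b (inord i) (inord j) = nth 0 (nth [::] [:: [:: 0; - a%:Z; 0; b%:Z];
                       [:: 1; 0; -1; 0];
                       [:: 0; a%:Z; 0; - b%:Z];
                       [:: -1; 0; 1; 0]] i) j.
Proof. by move=> hi hj; rewrite /Bab mxE !inordK. Qed.

Lemma v1 : nat_of_ord i1 = 0%N. Proof. by rewrite /i1 inordK. Qed.
Lemma v2 : nat_of_ord i2 = 1%N. Proof. by rewrite /i2 inordK. Qed.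
Lemma v3 : nat_of_ord i3 = 2%N. Proof. by rewrite /i3 inordK. Qed.
Lemma v4 : nat_of_ord i4 = 3%N. Proof. by rewrite /i4 inordK. Qed.
Lemma e12 : (i1 == i2) = false. Proof. by rewrite -val_eqE /= v1 v2. Qed.
Lemma e13 : (i1 == i3) = false. Proof. by rewrite -val_eqE /= v1 v3. Qed.
Lemma e14 : (i1 == i4) = false. Proof. by rewrite -val_eqE /= v1 v4. Qed.
Lemma e23 : (i2 == i3) = false. Proof. by rewrite -val_eqE /= v2 v3. Qed.
Lemma e24 : (i2 == i4) = false. Proof. by rewrite -val_eqE /= v2 v4. Qed.
Lemma e34 : (i3 == i4) = false. Proof. by rewrite -val_eqE /= v3 v4. Qed.

Lemma Bpp a b : (0 < a)%N -> (a < b)%N -> 0 <= mutate_seq [:: i4; i2] (Bab a b) i1 i3.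
Proof.
move=> ha hab.
rewrite /mutate_seq /= !mxE /= v1 v2 v3 v4 e12 e14 e24 e34 (eq_sym i3) e23 /=.
rewrite ?normr0 ?mulr0 ?mul0r ?addr0 ?mulr1 ?normrN ?normr1 ?mulr1 ?mulN1r.
rewrite (@ger0_norm _ a%:Z) // mulrN1 !half2 add0r; lia.
Qed.

Lemma half_pos (x y : int) : 0 <= x -> 0 <= y -> ((x * `|y| + `|x| * y) %/ 2)%Z = x * y.
Proof. by move=> hx hy; rewrite !ger0_norm // half2. Qed.

Lemma half_neg (x y : int) : x <= 0 -> y <= 0 -> ((x * `|y| + `|x| * y) %/ 2)%Z = - (x * y).
Proof. by move=> hx hy; rewrite !ler0_norm // mulrN mulNr half2. Qed.

Lemma mb_eq (n N : nat) (p : 'I_N -> 'I_n) k (M : 'M[int]_N) r c :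
  (forall x y, p x = k -> p y = k -> M x y = 0) -> p r != k -> p c != k ->
  mutate_block p k M r c =
  M r c + \sum_(kb in block p k) ((M r kb * `|M kb c| + `|M r kb| * M kb c) %/ 2)%Z.
Proof.
move=> hz hr hc; rewrite /mutate_block foldl_mut ?enum_uniq ?big_enum //.
- by move=> x y; rewrite !mem_enum !inE => /eqP hx /eqP hy; apply: hz.
- by rewrite mem_enum inE.
- by rewrite mem_enum inE.
Qed.

Theorem mainTheorem19 (a b : nat) (ha : (0 < a)%N) (hab : (a < b)%N) (hdiv : ~~ (a %| b)%N) :
  [/\ skew_symmetrizer (Bab a b) (dab a b),
      (coprime a b -> strongly_primitive (Bab a b)),
      ~ global_unfolding (Bab a b) &
      forall (N : nat) (C : 'M[int]_N) (p : 'I_N -> 'I_4),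
        unfolding (Bab a b) C p ->
        let C' := mutate_block_seq p [:: i4; i2] C in
        [/\ ~ unfolding (mutate_seq [:: i4; i2] (Bab a b)) C' p,
            (exists r c, [/\ p r = i1, p c = i3 & 0 < C' r c]) &
            (exists r c, [/\ p r = i1, p c = i3 & C' r c < 0])]].
Proof.
have H1 : skew_symmetrizer (Bab a b) (dab a b).
  split.
    move=> [[|[|[|[|i]]]] hi] //=; rewrite /dab /=; lia.
  move=> [[|[|[|[|i]]]] hi] [[|[|[|[|j]]]] hj] //; rewrite /Bab /dab !mxE /=; lia.
have H4 : forall (N : nat) (C : 'M[int]_N) (p : 'I_N -> 'I_4),
        unfolding (Bab a b) C p ->
        let C' := mutate_block_seq p [:: i4; i2] C in
        [/\ ~ unfolding (mutate_seq [:: i4; i2] (Bab a b)) C' p,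
            (exists r c, [/\ p r = i1, p c = i3 & 0 < C' r c]) &
            (exists r c, [/\ p r = i1, p c = i3 & C' r c < 0])].
  move=> N C p [he hrel hskew hsum hsign] C'.
  have memE x i : (x \in block p i) = (p x == i) by rewrite inE.
  have B12 : Bab a b i1 i2 = - a%:Z by rewrite /i1 /i2 Bab_val.
  have B13 : Bab a b i1 i3 = 0 by rewrite /i1 /i3 Bab_val.
  have B14 : Bab a b i1 i4 = b%:Z by rewrite /i1 /i4 Bab_val.
  have B21 : Bab a b i2 i1 = 1 by rewrite /i1 /i2 Bab_val.
  have B22 : Bab a b i2 i2 = 0 by rewrite /i2 Bab_val.
  have B23 : Bab a b i2 i3 = -1 by rewrite /i3 /i2 Bab_val.
  have B24 : Bab a b i2 i4 = 0 by rewrite /i4 /i2 Bab_val.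
  have B32 : Bab a b i3 i2 = a%:Z by rewrite /i3 /i2 Bab_val.
  have B34 : Bab a b i3 i4 = - b%:Z by rewrite /i3 /i4 Bab_val.
  have B41 : Bab a b i4 i1 = -1 by rewrite /i4 /i1 Bab_val.
  have B42 : Bab a b i4 i2 = 0 by rewrite /i4 /i2 Bab_val.
  have B43 : Bab a b i4 i3 = 1 by rewrite /i4 /i3 Bab_val.
  have B44 : Bab a b i4 i4 = 0 by rewrite /i4 Bab_val.
  have hz i j r c : p r = i -> p c = j -> Bab a b i j = 0 -> C r c = 0.
    move=> hr hc hB; have hs := hsum i j c hc; rewrite hB in hs.
    apply: (psumr_eq0P _ hs); last by rewrite memE hr.
    by move=> x; rewrite memE => /eqP hx; apply: (hsign _ _ _ _ hx hc); rewrite hB.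
  have rsum i j r : p r = i -> \sum_(c in block p j) C r c = - Bab a b j i.
    move=> hr; rewrite -(hsum j i r hr) -sumrN; apply: eq_bigr => c _; exact: hskew.
  case/card_gt0P: (he i4) => l0 l0E.
  have hY r l : r \in block p i1 -> l \in block p i4 -> 0 <= C r l.
    by rewrite !memE => /eqP hr /eqP hl; apply: (hsign _ _ _ _ hr hl); rewrite B14.
  have hW r l : r \in block p i4 -> l \in block p i3 -> 0 <= C r l.
    by rewrite !memE => /eqP hr /eqP hl; apply: (hsign _ _ _ _ hr hl); rewrite B43.
  have hX r l : r \in block p i1 -> l \in block p i2 -> C r l <= 0.
    rewrite !memE => /eqP hr /eqP hl; rewrite hskew oppr_le0.
    by apply: (hsign _ _ _ _ hl hr); rewrite B21.
  have hZ r l : r \in block p i2 -> l \in block p i3 -> C r l <= 0.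
    rewrite !memE => /eqP hr /eqP hl; rewrite hskew oppr_le0.
    by apply: (hsign _ _ _ _ hl hr); rewrite B32.
  have rY r : r \in block p i1 -> \sum_(l in block p i4) C r l = 1.
    by rewrite memE => /eqP hr; rewrite (rsum _ _ _ hr) B41 opprK.
  have rX r : r \in block p i1 -> \sum_(l in block p i2) C r l = -1.
    by rewrite memE => /eqP hr; rewrite (rsum _ _ _ hr) B21.
  have cW c : c \in block p i3 -> \sum_(l in block p i4) C l c = 1.
    by rewrite memE => /eqP hc; rewrite (hsum _ _ _ hc) B43.
  have cZ c : c \in block p i3 -> \sum_(l in block p i2) C l c = -1.
    by rewrite memE => /eqP hc; rewrite (hsum _ _ _ hc) B23.
  have sY c : c \in block p i4 -> \sum_(l in block p i1) C l c = b%:Z.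
    by rewrite memE => /eqP hc; rewrite (hsum _ _ _ hc) B14.
  have sX c : c \in block p i2 -> \sum_(l in block p i1) C l c = - a%:Z.
    by rewrite memE => /eqP hc; rewrite (hsum _ _ _ hc) B12.
  have sW r : r \in block p i4 -> \sum_(l in block p i3) C r l = b%:Z.
    by rewrite memE => /eqP hr; rewrite (rsum _ _ _ hr) B34 opprK.
  have sZ r : r \in block p i2 -> \sum_(l in block p i3) C r l = - a%:Z.
    by rewrite memE => /eqP hr; rewrite (rsum _ _ _ hr) B32.
  have [[r [c [rE cE hpos]]] [r' [c' [r'E c'E hneg]]]] :=
    @combi _ (block p i1) (block p i2) (block p i3) (block p i4) C a b l0 ha hab hdiv l0E
      hY hW hX hZ rY rX cW cZ sY sX sW sZ.
  have C'E x y : p x = i1 -> p y = i3 -> C' x y =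
      \sum_(l in block p i4) C x l * C l y - \sum_(k in block p i2) C x k * C k y.
    move=> hx hy.
    rewrite /C' /mutate_block_seq /=.
    set C1 := mutate_block p i4 C.
    have z44 x' y' : p x' = i4 -> p y' = i4 -> C x' y' = 0.
      by move=> h1 h2; apply: hz h1 h2 B44.
    have C1rk x' k : p x' = i1 -> p k = i2 -> C1 x' k = C x' k.
      move=> h1 h2; rewrite /C1 mb_eq //; last by rewrite h2 e24.
        rewrite big1 ?addr0 // => l; rewrite memE => /eqP hl.
        by rewrite (hz _ _ _ _ hl h2 B42) normr0 !mulr0 addr0 div0z.
      by rewrite h1 e14.
    have C1kc k y' : p k = i2 -> p y' = i3 -> C1 k y' = C k y'.
      move=> h1 h2; rewrite /C1 mb_eq //; last by rewrite h2 e34.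
        rewrite big1 ?addr0 // => l; rewrite memE => /eqP hl.
        by rewrite (hz _ _ _ _ h1 hl B24) normr0 !mul0r addr0 div0z.
      by rewrite h1 e24.
    have C1kk k k' : p k = i2 -> p k' = i2 -> C1 k k' = 0.
      move=> h1 h2; rewrite /C1 mb_eq //; [|by rewrite h1 e24|by rewrite h2 e24].
      rewrite (hz _ _ _ _ h1 h2 B22) add0r big1 // => l; rewrite memE => /eqP hl.
      by rewrite (hz _ _ _ _ h1 hl B24) normr0 !mul0r addr0 div0z.
    have C1rc : C1 x y = \sum_(l in block p i4) C x l * C l y.
      rewrite /C1 mb_eq //; [|by rewrite hx e14|by rewrite hy e34].
      rewrite (hz _ _ _ _ hx hy B13) add0r; apply: eq_bigr => l lE.
      by apply: half_pos; [apply: hY | apply: hW]; rewrite // memE ?hx ?hy.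
    rewrite mb_eq //; [|by rewrite hx e12|by rewrite hy eq_sym e23].
    rewrite C1rc -sumrN; congr (_ + _); apply: eq_bigr => k; rewrite memE => /eqP hk.
    rewrite C1rk // C1kc // half_neg //; [apply: hX | apply: hZ]; by rewrite memE ?hx ?hy ?hk.
  have toP x i : x \in block p i -> p x = i by rewrite memE => /eqP.
  split.
  - case=> _ _ _ _ h5.
    have := h5 i1 i3 r' c' (toP _ _ r'E) (toP _ _ c'E) (@Bpp a b ha hab : 0 <= mutate_seq [:: i4; i2] (Bab a b) i1 i3).
    rewrite (C'E r' c' (toP _ _ r'E) (toP _ _ c'E)) => h; have := lt_le_trans hneg h; by rewrite ltxx.
  - by exists r, c; rewrite (C'E r c (toP _ _ rE) (toP _ _ cE)) (toP _ _ rE) (toP _ _ cE).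
  - by exists r', c'; rewrite (C'E r' c' (toP _ _ r'E) (toP _ _ c'E)) (toP _ _ r'E) (toP _ _ c'E).
split => //.
- move=> cop; exists (dab a b); split => //.
  move=> [[|[|[|[|i]]]] hi] [[|[|[|[|j]]]] hj] //= hne; rewrite /dab /=;
    by rewrite ?coprime1n ?coprimen1 // coprime_sym.
- case=> N [C [p [hU hall]]].
  by case: (H4 N C p hU) => hnot _ _; apply: hnot; exact: (hall [:: i4; i2]).
Qed.
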